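(* In the setting described in the context, for every vertex $v\in V_L$ of $\mathfrak L_1$ the relation $\sim_v$ is an equivalence relation on $B_L(\Lambda_1,v)$.
   Context: $\mathbb Z_+=\{0,1,2,\dots\}$, $\mathbb N=\{1,2,\dots\}$. A $\lambda$-graph system $\mathfrak L=(V,E,\lambda,\iota)$ over a finite alphabet $\Sigma$ consists of finite nonempty pairwise disjoint vertex sets $V_l$ ($l\in\mathbb Z_+$); finite pairwise disjoint edge sets $E_{l,l+1}$, each $e\in E_{l,l+1}$ having a source $s(e)\in V_l$ and a terminal $t(e)\in V_{l+1}$; a labeling map $\lambda:E\to\Sigma$; and surjections $\iota:V_{l+1}\to V_l$; such that every vertex is the source of some edge, every vertex in $V_l$ ($l\ge1$) is the terminal of some edge, and (local property) for all $l\ge1$, $u\in V_{l-1}$, $v\in V_{l+1}$ there is a label-preserving bijection between $\{e\in E_{l,l+1}: \iota(s(e))=u,\ t(e)=v\}$ and $\{e\in E_{l-1,l}: s(e)=u,\ t(e)=\iota(v)\}$. Left-resolving: $t(e)=t(f)$, $\lambda(e)=\lambda(f)$ imply $e=f$. $\Omega_{\mathfrak L}=\{(u^l)_{l}\in\prod_l V_l: \iota(u^{l+1})=u^l\}$. $E_{\mathfrak L}$ = set of $(u,\alpha,w)\in\Omega_{\mathfrak L}\times\Sigma\times\Omega_{\mathfrak L}$ such that for each $l$ some $e\in E_{l,l+1}$ has $s(e)=u^l$, $t(e)=w^{l+1}$, $\lambda(e)=\alpha$. $X_{\mathfrak L}$ = set of $x=(\alpha_i,u_i)_{i\in\mathbb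 N}$ in $\Sigma\times\Omega_{\mathfrak L}$ with $(u_i,\alpha_{i+1},u_{i+1})\in E_{\mathfrak L}$ for all $i$ and $(u_0,\alpha_1,u_1)\in E_{\mathfrak L}$ for some $u_0$; relative product topology; $\sigma_{\mathfrak L}$ the left shift. For such $x$: $x_{[k,\infty)}=(\alpha_i,u_i)_{i\ge k}$; $\pi_{\mathfrak L}(x)=(\alpha_i)_{i\in\mathbb N}$, $\pi_{\mathfrak L}(x)_{[1,k]}=(\alpha_1,\dots,\alpha_k)$; $v^l_n(x)$ denotes the $l$-th coordinate $u_n^l$ of $u_n$. $X_\Lambda=\pi_{\mathfrak L}(X_{\mathfrak L})$, $B_k(X_\Lambda)$ its words of length $k$. Setting: $\mathfrak L_1,\mathfrak L_2$ are left-resolving $\lambda$-graph systems; write $\pi_i=\pi_{\mathfrak L_i}$, $\Lambda_i$ for the presented subshifts. $\psi_0:X_{\mathfrak L_1}\to X_{\mathfrak L_2}$ is a continuous surjection with $\sigma_{\mathfrak L_2}\circ\psi_0=\psi_0\circ\sigma_{\mathfrak L_1}$, and $1\le l\le L$ are integers such that (a) $\psi_0(x)=\psi_0(x')$ implies $x_{[l,\infty)}=x'_{[l,\infty)}$; (b) there is a map $\Psi:B_L(X_{\Lambda_1})\to B_l(X_{\Lambda_2})$ with $\pi_2(\psi_0(x))_{[1,l]}=\Psi(\pi_1(x)_{[1,L]})$ for all $x\in X_{\mathfrak L_1}$. (This is the situation obtained from an $(\mathfrak L_1,\mathfrak L_2)$-conjugacy of two-sided subshifts.) For $v\in V_L$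 (vertices of $\mathfrak L_1$), $B_L(\Lambda_1,v)$ is the set of $\mu\in B_L(X_{\Lambda_1})$ such that $\mu=\pi_1(x)_{[1,L]}$ for some $x\in X_{\mathfrak L_1}$ with $v^L_L(x)=v$. For $\mu,\mu'\in B_L(\Lambda_1,v)$, $\mu\sim_v\mu'$ means: there exist $x,x'\in X_{\mathfrak L_1}$ with $\pi_1(x)_{[1,L]}=\mu$, $\pi_1(x')_{[1,L]}=\mu'$, $v^L_L(x)=v^L_L(x')=v$ and $\psi_0(x)=\psi_0(x')$. *)

(* Defs.v *)
From mathcomp Require Import all_boot.
Set Implicit Arguments. Unset Strict Implicit. Unset Printing Implicit Defensive.

(* A lambda-graph system over a finite alphabet Sigma.
   V l = vertex set V_l, E l = edge set E_{l,l+1}; disjointness is automatic. *)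
Record lgs (Sigma : finType) := LGS {
  V : nat -> finType;
  E : nat -> finType;
  src : forall l, E l -> V l;
  tgt : forall l, E l -> V l.+1;
  lab : forall l, E l -> Sigma;
  iot : forall l, V l.+1 -> V l;
  V_nonempty : forall l, 0 < #|V l|;
  iot_surj : forall l (v : V l), exists w : V l.+1, iot w = v;
  src_surj : forall l (v : V l), exists e : E l, src e = v;
  tgt_surj : forall l (v : V l.+1), exists e : E l, tgt e = v;
  (* local property, written for l+1 (l >= 0): u in V_l, v in V_{l+2} *)
  local_prop : forall l (u : V l) (v : V l.+2),
    exists f : {e : E l.+1 | iot (src e) = u /\ tgt e = v} ->
               {e : E l | src e = u /\ tgt e = iot v},
      bijective f /\ forall e, lab (proj1_sig (f e)) = lab (proj1_sig e)
}.

Arguments V {Sigma} l0 l : rename.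
Arguments E {Sigma} l0 l : rename.

Definition left_resolving (S : finType) (G : lgs S) : Prop :=
  forall l (e f : E G l), tgt e = tgt f -> lab e = lab f -> e = f.

Record omega (S : finType) (G : lgs S) := Omega {
  ou :> forall l, V G l;
  ou_compat : forall l, iot (ou l.+1) = ou l
}.

Definition inEL (S : finType) (G : lgs S) (u : omega G) (a : S) (w : omega G) : Prop :=
  forall l, exists e : E G l, src e = u l /\ tgt e = w l.+1 /\ lab e = a.

(* Sequences x : nat -> S * omega G, where x n stands for (alpha_{n+1}, u_{n+1}). *)
Definition inX (S : finType) (G : lgs S) (x : nat -> S * omega G) : Prop :=
  (forall n, inEL (x n).2 (x n.+1).1 (x n.+1).2) /\
  exists u0 : omega G, inEL u0 (x 0).1 (x 0).2.

Definition XL (S : finType) (G : lgs S) := {x : nat -> S * omega G | inX x}.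

Lemma inX_shift (S : finType) (G : lgs S) (x : nat -> S * omega G) :
  inX x -> inX (fun n => x n.+1).
Proof. by case=> H _; split; [move=> n; apply: H | exists (x 0).2; apply: H]. Qed.

Definition sigmaL (S : finType) (G : lgs S) (x : XL G) : XL G :=
  exist _ (fun n => proj1_sig x n.+1) (inX_shift (proj2_sig x)).

Definition word (S : finType) (G : lgs S) (x : XL G) (k : nat) : seq S :=
  [seq (proj1_sig x i).1 | i <- iota 0 k].

(* v^l_n(x), for n >= 1 *)
Definition vert (S : finType) (G : lgs S) (x : XL G) (l n : nat) : V G l :=
  ou (proj1_sig x n.-1).2 l.

(* agreement on the basic cylinder of depth N (product of discrete topologies) *)
Definition agree (S : finType) (G : lgs S) (N : nat) (x x' : nat -> S * omega G) : Prop :=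
  forall i, i < N -> (x i).1 = (x' i).1 /\
    forall l, l < N -> ou (x i).2 l = ou (x' i).2 l.

(* continuity for the relative product topology *)
Definition continuousX (S1 S2 : finType) (G1 : lgs S1) (G2 : lgs S2)
  (f : XL G1 -> XL G2) : Prop :=
  forall (x : XL G1) (n : nat), exists N, forall x' : XL G1,
    agree N (proj1_sig x) (proj1_sig x') -> agree n (proj1_sig (f x)) (proj1_sig (f x')).

Definition BLv (S : finType) (G : lgs S) (L : nat) (v : V G L) (mu : seq S) : Prop :=
  exists x : XL G, word x L = mu /\ vert x L L = v.

Definition simv (S1 S2 : finType) (G1 : lgs S1) (G2 : lgs S2)
  (psi0 : XL G1 -> XL G2) (L : nat) (v : V G1 L) (mu mu' : seq S1) : Prop :=
  exists x x' : XL G1, [/\ word x L = mu, word x' L = mu',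
    vert x L L = v, vert x' L L = v & psi0 x = psi0 x'].

(* Main.v *)
Require Import Defs.
From mathcomp Require Import all_boot.
From Stdlib Require Import ProofIrrelevance FunctionalExtensionality.
Set Implicit Arguments. Unset Strict Implicit.

Section G.
Variables (S : finType) (G : lgs S).

Lemma omega_ext (w w' : omega G) : (forall l, w l = w' l) -> w = w'.
Proof.
case: w => f cf; case: w' => g cg /= H.
have E : f = g by apply: functional_extensionality_dep.
subst g; f_equal; apply: proof_irrelevance.
Qed.

Lemma XL_ext (x y : XL G) : (forall i, proj1_sig x i = proj1_sig y i) -> x = y.
Proof.
case: x => f pf; case: y => g pg /= H.
have E : f = g by apply: functional_extensionality.
subst g; f_equal; apply: proof_irrelevance.
Qed.

Lemma omega_down (w w' : omega G) N : w N = w' N -> forall m, m <= N -> w m = w' m.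
Proof.
elim: N => [|N IH] H m.
  by rewrite leqn0 => /eqP ->.
rewrite leq_eqVlt => /orP [/eqP -> // | ]; rewrite ltnS; apply: IH.
by rewrite -(ou_compat w) -(ou_compat w') H.
Qed.

Lemma pred_up (w : omega G) a : (exists e : E G 0, tgt e = w 1 /\ lab e = a) ->
  forall l', exists e : E G l', tgt e = w l'.+1 /\ lab e = a.
Proof.
move=> H0; elim=> [//|l' [e [te le]]].
have [f [[g fg gf] fl]] := local_prop (src e) (w l'.+2).
have pe : src e = src e /\ tgt e = iot (w l'.+2) by rewrite ou_compat.
pose e' := (exist (fun e0 : E G l' => src e0 = src e /\ tgt e0 = iot (w l'.+2)) e pe).
exists (proj1_sig (g e')).
have := proj2_sig (g e'); case=> _ ->; split=> //.
by rewrite -le -fl gf.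
Qed.

Hypothesis lr : left_resolving G.

Lemma back (w : omega G) a : (exists e : E G 0, tgt e = w 1 /\ lab e = a) ->
  exists u : omega G, inEL u a w /\
    forall l' (e : E G l'), tgt e = w l'.+1 -> lab e = a -> u l' = src e.
Proof.
move=> H0.
have P l' : exists e : E G l', (tgt e == w l'.+1) && (lab e == a).
  by have [e0 [t0 l0]] := pred_up H0 l'; exists e0; rewrite t0 l0 !eqxx.
pose e l' := xchoose (P l').
have eP l' : tgt (e l') = w l'.+1 /\ lab (e l') = a.
  by have /andP [/eqP -> /eqP ->] := xchooseP (P l').
have comp l' : iot (src (e l'.+1)) = src (e l').
  have [f [_ fl]] := local_prop (iot (src (e l'.+1))) (w l'.+2).
  have pe : iot (src (e l'.+1)) = iot (src (e l'.+1)) /\ tgt (e l'.+1) = w l'.+2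
    by split=> //; rewrite (proj1 (eP _)).
  pose q := (exist (fun e0 : E G l'.+1 => iot (src e0) = iot (src (e l'.+1)) /\ tgt e0 = w l'.+2) _ pe).
  have [s1 t1] := proj2_sig (f q).
  have l1 := fl q; rewrite /= (proj2 (eP _)) in l1.
  move: (proj1_sig (f q)) s1 t1 l1 => e1 s1 t1 l1.
  rewrite ou_compat in t1.
  have Eq : e1 = e l' by apply: lr; [rewrite t1 (proj1 (eP l')) | rewrite l1 (proj2 (eP l'))].
  by rewrite -Eq.
pose u := Omega comp.
exists u; split.
  by move=> l'; exists (e l'); have [? ?] := eP l'.
move=> l' e0 t0 l0; rewrite /=.
suff -> : e l' = e0 by [].
by apply: lr; rewrite ?t0 ?l0; case: (eP l').
Qed.
End G.

Section G2.
Variables (S : finType) (G : lgs S).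
Hypothesis lr : left_resolving G.

Lemma glue (x : XL G) k : forall w : omega G,
  (forall m, m <= k.+1 -> w m = ou (proj1_sig x k).2 m) ->
  exists f : nat -> S * omega G,
    [/\ f k = ((proj1_sig x k).1, w),
        forall i, i < k -> inEL (f i).2 (f i.+1).1 (f i.+1).2,
        exists u0, inEL u0 (f 0).1 (f 0).2 &
        forall i, i <= k -> (f i).1 = (proj1_sig x i).1].
Proof.
case: x => x [Hx [u0 Hu0]] /=.
elim: k => [|k IH] w Hw.
  exists (fun _ => ((x 0).1, w)); split=> //.
    have [e [se [te le]]] := Hu0 0.
    have [u [Hu _]] := back lr (a := (x 0).1) (w := w) (ex_intro _ e (conj (etrans te (esym (Hw 1 (leqnn _)))) le)).
    by exists u.
  by move=> i; rewrite leqn0 => /eqP ->.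
have [e [se [te le]]] := Hx k 0.
have [u [Hu Hsrc]] := back lr (a := (x k.+1).1) (w := w) (ex_intro _ e (conj (etrans te (esym (Hw 1 (ltn0Sn _)))) le)).
have Hw' : forall m, m <= k.+1 -> u m = ou (x k).2 m.
  move=> m hm; have [e' [se' [te' le']]] := Hx k m.
  by rewrite -se'; apply: Hsrc => //; rewrite te' Hw.
have [f [f1 f2 f3 f4]] := IH u Hw'.
exists (fun i => if i == k.+1 then ((x k.+1).1, w) else f i); split.
- by rewrite eqxx.
- move=> i hi; rewrite (ltn_eqF hi).
  case: (eqVneq i.+1 k.+1) => [[Ei]|ne].
    by rewrite Ei f1.
  by apply: f2; rewrite ltn_neqAle -ltnS ne.
- by case: f3 => v Hv; exists v.
- move=> i hi; case: (eqVneq i k.+1) => [->//|ne].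
  by apply: f4; rewrite -ltnS ltn_neqAle ne.
Qed.
End G2.

Section G3.
Variables (S : finType) (G : lgs S).

Lemma word_nth (x : XL G) k i d : i < k -> nth d (word x k) i = (proj1_sig x i).1.
Proof. by move=> h; rewrite /word (nth_map 0) ?size_iota // nth_iota. Qed.

Lemma word_size (x : XL G) k : size (word x k) = k.
Proof. by rewrite /word size_map size_iota. Qed.

Lemma word_eq (x y : XL G) k : (forall i, i < k -> (proj1_sig x i).1 = (proj1_sig y i).1) ->
  word x k = word y k.
Proof. by move=> H; apply/eq_in_map => i; rewrite mem_iota add0n; apply: H. Qed.

Lemma iterSX j (x : XL G) i : proj1_sig (iter j (@sigmaL _ G) x) i = proj1_sig x (i + j).
Proof. by elim: j i => [|j IH] i; rewrite ?addn0 //= IH addnS. Qed.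

Lemma back_uniq (lr : left_resolving G) (p q : XL G) N :
  (forall i, (proj1_sig p i).1 = (proj1_sig q i).1) ->
  (forall i, N <= i -> proj1_sig p i = proj1_sig q i) -> p = q.
Proof.
move=> Hl HN; apply: XL_ext.
have Hp := proj1 (proj2_sig p); have Hq := proj1 (proj2_sig q).
suff H d : forall i, N <= i + d -> proj1_sig p i = proj1_sig q i.
  by move=> i; apply: (H N); rewrite leq_addl.
elim: d => [|d IH] i hi; first by apply: HN; rewrite addn0 in hi.
have E1 : proj1_sig p i.+1 = proj1_sig q i.+1 by apply: IH; rewrite addSn -addnS.
have Hu := Hp i; have Hw := Hq i; have Hli := Hl i.
rewrite E1 in Hu.
move: (proj1_sig p i) (proj1_sig q i) Hli Hu Hw => [a u] [b w] /= <- Hu Hw.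
congr pair; apply: omega_ext => l'.
have [e [se [te le]]] := Hu l'; have [e' [se' [te' le']]] := Hw l'.
by rewrite -se -se'; congr src; apply: lr; rewrite ?te ?te' ?le ?le'.
Qed.
End G3.

Theorem lemma7p4 (S1 S2 : finType) (G1 : lgs S1) (G2 : lgs S2)
  (lr1 : left_resolving G1) (lr2 : left_resolving G2)
  (psi0 : XL G1 -> XL G2)
  (psi0_cont : continuousX psi0)
  (psi0_surj : forall y : XL G2, exists x, psi0 x = y)
  (psi0_shift : forall x, psi0 (sigmaL x) = sigmaL (psi0 x))
  (l L : nat) (hl : 1 <= l) (hlL : l <= L)
  (ha : forall x x' : XL G1, psi0 x = psi0 x' ->
          forall n, l <= n -> proj1_sig x n.-1 = proj1_sig x' n.-1)
  (hb : exists Psi : seq S1 -> seq S2,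
          forall x : XL G1, word (psi0 x) l = Psi (word x L)) :
  forall v : V G1 L,
    (forall mu, BLv v mu -> simv psi0 v mu mu) /\
    (forall mu mu', simv psi0 v mu mu' -> simv psi0 v mu' mu) /\
    (forall mu1 mu2 mu3, simv psi0 v mu1 mu2 -> simv psi0 v mu2 mu3 ->
                          simv psi0 v mu1 mu3).
Proof.
move=> v; split; [|split].
- by move=> mu [x [wx vx]]; exists x, x; split.
- by move=> mu mu' [x [x' [w w' vx vx' e]]]; exists x', x; split.
move=> mu1 mu2 mu3 [x1 [x2 [w1 w2 v1 v2 e12]]] [y2 [y3 [w2' w3 v2' v3 e23]]].
have [Psi HPsi] := hb.
have hL : 0 < L by apply: leq_trans hlL.
have ha12 := ha _ _ e12.
have Hagree : forall m, m <= (L.-1).+1 -> ou (proj1_sig y2 L.-1).2 m = ou (proj1_sig x1 L.-1).2 m.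
  apply: omega_down; rewrite prednK //.
  by move: v1 v2'; rewrite /vert => -> ->.
have [f [f1 f2 f3 f4]] := glue lr1 Hagree.
have sym : forall k, l.-1 <= k -> k < L -> (proj1_sig x1 k).1 = (proj1_sig y2 k).1.
  move=> k h1 h2.
  have -> : proj1_sig x1 k = proj1_sig x2 k by apply: (ha12 k.+1); rewrite -(prednK hl) ltnS.
  have := word_nth x2 (proj1_sig x2 k).1 h2; have := word_nth y2 (proj1_sig x2 k).1 h2.
  by rewrite w2 w2' => -> ->.
have hL1 : L.-1 < L by rewrite prednK.
have fL : f L.-1 = proj1_sig y2 L.-1.
  rewrite f1 (sym _ _ hL1) //; last by rewrite -!subn1 leq_sub2r.
  by case: (proj1_sig y2 L.-1).
pose zf i := if i <= L.-1 then f i else proj1_sig y2 i.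
have zfy : forall i, L.-1 <= i -> zf i = proj1_sig y2 i.
  move=> i hi; rewrite /zf; case: ifP => // h.
  by have -> : i = L.-1 by apply/eqP; rewrite eqn_leq h hi.
have zX : inX zf.
  split.
    move=> n; case: (leqP n.+1 L.-1) => h.
      by rewrite /zf h (ltnW h); apply: f2.
    by rewrite !zfy // ?(ltnW h) //; apply: (proj1 (proj2_sig y2)).
  case: f3 => u0 Hu0; exists u0.
  by rewrite /zf leq0n.
pose z : XL G1 := exist _ zf zX.
have zsym : forall k, l.-1 <= k -> (proj1_sig z k).1 = (proj1_sig y2 k).1.
  move=> k hk; rewrite /= /zf; case: ifP => h //.
  rewrite f4 // sym //; apply: leq_ltn_trans h hL1.
have psi_iter : forall j (x : XL G1), psi0 (iter j (@sigmaL _ G1) x) = iter j (@sigmaL _ G2) (psi0 x).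
  by elim=> [|j IH] x //=; rewrite psi0_shift IH.
exists z, y3; split=> //.
- rewrite -w1; apply: word_eq => i hi /=.
  rewrite /zf; have hi' : i <= L.-1 by rewrite -ltnS prednK.
  by rewrite hi' f4.
- by rewrite /vert /= zfy // -v2'.
rewrite -e23.
apply: (back_uniq lr2 (N := L)).
  move=> i.
  set d := (proj1_sig (psi0 z) 0).1.
  case: (ltnP i l) => hi.
    rewrite -(word_nth _ d hi) -(word_nth (psi0 y2) d hi) !HPsi w2'.
    have -> : word z L = mu1.
      rewrite -w1; apply: word_eq => j hj /=.
      rewrite /zf; have hj' : j <= L.-1 by rewrite -ltnS prednK.
      by rewrite hj' f4.
    by rewrite -w1 -w2 -!HPsi e12.
  have h0 : 0 < l by [].
  have := word_nth (iter i (@sigmaL _ G2) (psi0 z)) d h0.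
  have := word_nth (iter i (@sigmaL _ G2) (psi0 y2)) d h0.
  rewrite (iterSX i (psi0 y2) 0) (iterSX i (psi0 z) 0) !add0n => <- <-.
  rewrite -!psi_iter !HPsi; congr (nth _ (Psi _) 0).
  apply: word_eq => j hj; rewrite !iterSX zsym //.
  exact: leq_trans (leq_pred _) (leq_trans hi (leq_addl _ _)).
move=> i hi.
have Ez : iter L (@sigmaL _ G1) z = iter L (@sigmaL _ G1) y2.
  by apply: XL_ext => j; rewrite !iterSX /= zfy // (leq_trans (leq_pred _)) // leq_addl.
have := f_equal (fun p : XL G1 => proj1_sig (psi0 p) (i - L)) Ez.
by rewrite /= !psi_iter !iterSX subnK.
Qed.
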